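(* Let $G=(V,E,L)$ be a parity graph with priorities in an index $I$, started from a vertex $p_0$. If $G$ is not even, then for every index $J$ with $\min(J)\in\{1,2\}$ and every $N\in\mathbb{N}$, Adam wins the priority transduction game $\mathrm{Reg}^J_N(G)$.
   Context: An index is a nonempty finite interval of $\mathbb{N}$. A sequence of priorities is parity accepting if its $\limsup$ is even. A parity graph is $(V,E,L)$ with $V$ countable, $E\subseteq V\times V$ (every vertex having an outgoing edge), $L:E\to I$; it is even if every infinite path from the start vertex has parity accepting priority sequence. Priority transduction game $\mathrm{Reg}^J_N(G)$: configurations consist of a current vertex, registers $r_j\in I$ for each $j$ with $2j\in J$ (plus $r_0$ if $1\in J$), and counters $c_{i,j}\in\mathbb{N}$ for odd $i\in I$ and register indices $j$. Initially the vertex is $p_0$, counters are $0$, registers are $\min(I)$. At each step: (a) Adam chooses an outgoing edge $e$ and the vertex is updated; (b) Eve chooses a register $r_j$; (c) output $w$: $w=1$ if $j=0$; else $w=2j$ if $r_j$ is even; else if $c_{r_j,j}=N$ then $w=2j+1$, $c_{r_j,j}:=0$, and Eve loses immediately if $2j+1\notin J$; else $w=2j$ and $c_{r_j,j}:=c_{r_j,j}+1$; (d) if $L(e)$ is even, $i:=L(e)$, else Eve chooses an odd $i\in I$ with $i\ge L(e)$; then $c_{i',j}:=0$ for all $i'<i$, $c_{r_j,j'}:=0$ for all $j'<j$, $r_{j'}:=\max(i,r_{j'})$ for all $j'>j$, and $r_j:=i$. Eve wins iff she never loses immediately and the output sequence is parity accepting; otherwise Adam wins. *)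

(* Defs.v *)
From mathcomp Require Import all_boot.
Set Implicit Arguments.
Unset Strict Implicit.
Unset Printing Implicit Defensive.

(* An index [lo, hi] (lo <= hi) is represented by its two endpoints. *)
Definition inI (lo hi x : nat) : bool := (lo <= x) && (x <= hi).

(* limsup of a nat sequence is (finite and) even:
   some even m occurs infinitely often and is eventually an upper bound. *)
Definition parity_accepting (u : nat -> nat) : Prop :=
  exists m, ~~ odd m /\
    (forall n, exists k, n <= k /\ u k = m) /\
    (exists n0, forall k, n0 <= k -> u k <= m).

Section Graph.
Variable V : Type.

Definition is_path (E : V -> V -> Prop) (p0 : V) (pi : nat -> V) : Prop :=
  pi 0 = p0 /\ forall k, E (pi k) (pi k.+1).

Definition even_graph (E : V -> V -> Prop) (L : V -> V -> nat) (p0 : V) : Prop :=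
  forall pi, is_path E p0 pi -> parity_accepting (fun k => L (pi k) (pi k.+1)).
End Graph.

(* configuration minus the current vertex: registers r_j and counters c_{i,j} *)
Record config := Config { reg : nat -> nat; cnt : nat -> nat -> nat }.

Definition is_reg (jlo jhi j : nat) : bool :=
  inI jlo jhi (2 * j) || ((j == 0) && inI jlo jhi 1).

Definition init_config (lo : nat) : config :=
  Config (fun _ => lo) (fun _ _ => 0).

(* One step, after Adam chose an edge with label l:
   Eve chose register j and (used only if l is odd) priority ich.
   Returns (output w, "Eve loses immediately", new configuration). *)
Definition game_step (N jlo jhi : nat) (s : config) (l j ich : nat)
  : nat * bool * config :=
  let r := reg s in
  let c := cnt s in
  let '(w, lose, c1) :=
    if j == 0 then (1, false, c)
    else if ~~ odd (r j) then (2 * j, false, c)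
    else if c (r j) j == N then
      (2 * j + 1, ~~ inI jlo jhi (2 * j + 1),
       fun i' j' => if (i' == r j) && (j' == j) then 0 else c i' j')
    else
      (2 * j, false,
       fun i' j' => if (i' == r j) && (j' == j) then (c i' j').+1 else c i' j')
  in
  let i := if odd l then ich else l in
  let c2 := fun i' j' =>
    if ((j' == j) && (i' < i)) || ((i' == r j) && (j' < j)) then 0 else c1 i' j' in
  let r2 := fun j' =>
    if j' == j then i else if j < j' then maxn i (r j') else r j' in
  (w, lose, Config r2 c2).

Section Play.
Variables (V : Type) (L : V -> V -> nat) (lo N jlo jhi : nat).
(* a play: pi k = vertex before step k (pi 0 = p0), pi k.+1 chosen by Adam
   at step k; jj k and ii k are Eve's choices at step k *)
Variables (pi : nat -> V) (jj ii : nat -> nat).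

Fixpoint conf_at (k : nat) : config :=
  match k with
  | 0 => init_config lo
  | k'.+1 => (game_step N jlo jhi (conf_at k') (L (pi k') (pi k'.+1)) (jj k') (ii k')).2
  end.

Definition out_at (k : nat) : nat :=
  (game_step N jlo jhi (conf_at k) (L (pi k) (pi k.+1)) (jj k) (ii k)).1.1.

Definition lose_at (k : nat) : bool :=
  (game_step N jlo jhi (conf_at k) (L (pi k) (pi k.+1)) (jj k) (ii k)).1.2.

Definition eve_wins_play : Prop :=
  (forall k, ~~ lose_at k) /\ parity_accepting out_at.
End Play.

Definition history (V : Type) (pi : nat -> V) (jj ii : nat -> nat) (k : nat)
  : seq (V * nat * nat) :=
  [seq (pi t.+1, jj t, ii t) | t <- iota 0 k].

Definition current_vertex (V : Type) (p0 : V) (h : seq (V * nat * nat)) : V :=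
  last p0 [seq x.1.1 | x <- h].

Definition adam_wins (V : Type) (E : V -> V -> Prop) (L : V -> V -> nat)
  (lo hi : nat) (p0 : V) (jlo jhi N : nat) : Prop :=
  exists sigma : seq (V * nat * nat) -> V,
    (forall h, E (current_vertex p0 h) (sigma h)) /\
    forall (pi : nat -> V) (jj ii : nat -> nat),
      pi 0 = p0 ->
      (forall k, pi k.+1 = sigma (history pi jj ii k)) ->
      (forall k, is_reg jlo jhi (jj k) &&
         (odd (L (pi k) (pi k.+1)) ==>
            [&& odd (ii k), inI lo hi (ii k) & L (pi k) (pi k.+1) <= ii k])) ->
      ~ eve_wins_play L lo N jlo jhi pi jj ii.

(* Main.v *)
Require Import Defs.
From mathcomp Require Import all_boot.
From Stdlib Require Import Classical.
From mathcomp Require Import zify.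
Lemma limsup_ex B (u : nat -> nat) : (forall k, u k <= B) ->
  exists M, (forall n, exists k, n <= k /\ u k = M) /\ exists n0, forall k, n0 <= k -> u k <= M.
Proof.
move=> hu; elim: B u hu => [|B IH] u hu.
  exists 0; split; last by exists 0 => k _; exact: hu.
  move=> n; exists n; split => //; apply/eqP; rewrite -leqn0; exact: hu.
case: (classic (forall n, exists k, n <= k /\ u k = B.+1)) => h.
  by exists B.+1; split => //; exists 0.
have [n hn] : exists n, forall k, n <= k -> u k <> B.+1.
  apply: NNPP => hc; apply: h => n; apply: NNPP => hc2; apply: hc; exists n => k hk e.
  by apply: hc2; exists k.
have hv : forall k, u (k + n) <= B.
  move=> k; have := hu (k + n); rewrite leq_eqVlt ltnS => /orP [/eqP e|//].
  by exfalso; apply: (hn (k + n)) => //; exact: leq_addl.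
have [M [h1 [n0 h2]]] := IH _ hv.
exists M; split.
  move=> m; have [k [hk e]] := h1 m; exists (k + n); split => //.
  exact: leq_trans hk (leq_addr _ _).
exists (n0 + n) => k hk; have := h2 (k - n); rewrite subnK; last first.
  lia.
move=> H; apply: H; lia.
Qed.
Section S.
Variables (N jlo jhi : nat) (s : config) (l j ich : nat).
Let g := game_step N jlo jhi s l j ich.
Let iv := if odd l then ich else l.

Lemma L1 : (j = 0 /\ g.1.1 = 1) \/ (0 < j /\ (g.1.1 = 2*j \/ g.1.1 = 2*j+1)).
Proof.
rewrite /g /game_step; case: (j =P 0) => [->|nj]; first by left.
right; have jp : 0 < j by case: j nj => //.
by case: ifP => _ //=; [auto| case: ifP => _ /=; auto].
Qed.

Lemma L2 js : reg g.2 js = if js == j then iv else if j < js then maxn iv (reg s js) else reg s js.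
Proof.
rewrite /g /game_step; case: (j =P 0) => _ //=; case: ifP => _ //=; case: ifP => _ //=.
Qed.

Lemma L3 : (forall a b, cnt s a b <= N) -> forall a b, cnt g.2 a b <= N.
Proof.
move=> H a b; rewrite /g /game_step; case: (j =P 0) => _ /=; first by case: ifP.
case: ifP => _ /=; first by case: ifP.
case: ifP => cN /=; case: ifP => _ //; case: ifP => // /andP [/eqP ea /eqP eb].
by rewrite ea eb ltn_neqAle cN H.
Qed.
End S.
Section S2.
Variables (N jlo jhi : nat) (s : config) (l j ich : nat).
Let g := game_step N jlo jhi s l j ich.

Lemma L4 M js : (if odd l then ich else l) <= M -> j <= js -> 0 < js ->
  g.1.1 != 2*js+1 -> cnt s M js <= cnt g.2 M js.
Proof.
move=> hi hj hjs; rewrite /g /game_step.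
have h1 : (js == j) && (M < (if odd l then ich else l)) = false by rewrite ltnNge hi andbF.
have h2 : (M == reg s j) && (js < j) = false by rewrite ltnNge hj andbF.
case: (j =P 0) => _ /=; rewrite ?h1 ?h2 //=; case: ifP => _ /=; rewrite ?h1 ?h2 //=; case: ifP => _ /=; rewrite ?h1 ?h2 //=.
  case: ifP => // /andP [/eqP -> /eqP ->]; by rewrite eqxx.
by case: ifP.
Qed.

Lemma L5 M js : (if odd l then ich else l) <= M -> j = js -> 0 < js -> reg s js = M -> odd M ->
  g.1.1 != 2*js+1 -> cnt g.2 M js = (cnt s M js).+1.
Proof.
move=> hi hj hjs hr hM; rewrite /g /game_step.
have h1 : (js == j) && (M < (if odd l then ich else l)) = false by rewrite ltnNge hi andbF.
have h2 : (M == reg s j) && (js < j) = false by rewrite hj ltnn andbF.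
subst j; case: (js =P 0) => [e|_]; first by rewrite e in hjs.
rewrite hr hM /=; case: ifP => /= [_|_ _]; rewrite ?h1 ?h2 /=; first by rewrite eqxx.
by rewrite ltnn !eqxx.
Qed.
End S2.
Section Core.
Variables (V : Type) (L : V -> V -> nat) (lo hi N jlo jhi : nat) (pi : nat -> V) (jj ii : nat -> nat).
Let lab k := L (pi k) (pi k.+1).
Let iv k := if odd (lab k) then ii k else lab k.
Let conf := conf_at L lo N jlo jhi pi jj ii.
Let out := out_at L lo N jlo jhi pi jj ii.
Hypothesis hlab : forall k, lab k <= hi.
Hypothesis hleg : forall k, odd (lab k) -> odd (ii k) && (lab k <= ii k) && (ii k <= hi).
Hypothesis hna : ~ parity_accepting lab.

Let hstep k : conf k.+1 = (game_step N jlo jhi (conf k) (lab k) (jj k) (ii k)).2.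
Proof. by []. Qed.
Let hout k : out k = (game_step N jlo jhi (conf k) (lab k) (jj k) (ii k)).1.1.
Proof. by []. Qed.

Lemma core : ~ parity_accepting out.
Proof.
move=> [m2 [m2e [m2inf [n1 hn1]]]].
have hiv : forall k, iv k <= hi.
  move=> k; rewrite /iv; case: ifP => o //; by have /andP [] := hleg _ o.
have [M [Minf [n0 hn0]]] := (@limsup_ex _ _ hiv).
have Modd : odd M.
  apply: contraT => Me; exfalso; apply: hna; exists M; split => //; split.
    move=> n; have [k [hk e]] := Minf n; exists k; split => //.
    move: e; rewrite /iv; case: ifP => o // e.
    by have /andP [/andP [oi _] _] := hleg _ o; rewrite e (negbTE Me) in oi.
  exists n0 => k hk; apply: leq_trans (hn0 k hk); rewrite /iv; case: ifP => o //.
  by have /andP [/andP [_ ->] _] := hleg _ o.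
pose js := m2./2.
have m2js : m2 = 2 * js by rewrite -(odd_double_half m2) (negbTE m2e) add0n -muln2 mulnC.
have js0 : 0 < js.
  have [k [_ e]] := m2inf 0; move: e; rewrite hout.
  case: (L1 N jlo jhi (conf k) (lab k) (jj k) (ii k)) => [[_ ->]|[hp [->|->]]] e; lia.
have hj : forall k, n1 <= k -> jj k <= js.
  move=> k hk; have := hn1 k hk; rewrite hout.
  case: (L1 N jlo jhi (conf k) (lab k) (jj k) (ii k)) => [[-> _]|[hp [->|->]]] e; lia.
have hno : forall k, n1 <= k -> out k != 2 * js + 1.
  move=> k hk; have := hn1 k hk; apply: contraTneq => ->; lia.
have hjsinf : forall n, exists k, n <= k /\ jj k = js.
  move=> n; have [k [hk e]] := m2inf n; exists k; split => //; move: e; rewrite hout.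
  case: (L1 N jlo jhi (conf k) (lab k) (jj k) (ii k)) => [[_ ->]|[hp [->|->]]] e; lia.
have hcb : forall k a b, cnt (conf k) a b <= N.
  elim=> [|k IH] a b; first by [].
  by rewrite hstep; apply: L3.
pose T := maxn n0 n1.
have [k1 [hk1 ek1]] := hjsinf T.
have hT : forall k, k1 <= k -> [/\ iv k <= M, jj k <= js & out k != 2 * js + 1].
  move=> k hk; have h0 : n0 <= k by move: hk1 hk; rewrite /T; lia.
  have h1 : n1 <= k by move: hk1 hk; rewrite /T; lia.
  by split; [exact: hn0 | exact: hj | exact: hno].
have hreg : forall k, k1 < k -> reg (conf k) js <= M.
  elim=> [|k IH] //; rewrite ltnS => hk; have [h1 h2 _] := hT k hk.
  rewrite hstep L2; case: eqP => e; first exact: h1.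
  case: ifP => _; last first.
    apply: IH; rewrite ltn_neqAle hk andbT; apply/eqP => e2; apply: e; by rewrite -e2.
  rewrite geq_max h1 /=; apply: IH; rewrite ltn_neqAle hk andbT; apply/eqP => e2; apply: e; by rewrite -e2.
have hset : forall k, k1 < k -> iv k = M -> reg (conf k.+1) js = M.
  move=> k hk e; have [_ h2 _] := hT k (ltnW hk).
  rewrite hstep L2; case: eqP => e1; first exact: e.
  case: ifP => h3; first by rewrite -/(iv k) e; apply/maxn_idPl; exact: hreg.
  exfalso; move: h2 h3 e1; lia.
have hper : forall k, k1 < k -> reg (conf k) js = M -> jj k < js -> reg (conf k.+1) js = M.
  move=> k hk e h; rewrite hstep L2; case: eqP => e1; first by move: h; rewrite e1 ltnn.
  rewrite h e; apply/maxn_idPr; have [h1 _ _] := hT k (ltnW hk); exact: h1.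
have hA : forall n, exists k, [/\ n <= k, k1 < k, jj k = js & reg (conf k) js = M].
  move=> n; have [k [hk e]] := Minf (maxn n k1.+1).
  have hkk : k1 < k by move: hk; rewrite geq_max => /andP [].
  have e1 := hset k hkk e.
  have exd : exists d, jj (k.+1 + d) == js.
    have [k' [hk' e']] := hjsinf k.+1; exists (k' - k.+1); by rewrite subnKC // e'.
  case: (ex_minnP exd) => d /eqP hd hmin.
  have hall : forall t, t <= d -> reg (conf (k.+1 + t)) js = M.
    elim=> [|t IH] ht; first by rewrite addn0.
    rewrite addnS; apply: hper; first by lia.
      by apply: IH; exact: ltnW.
    have [_ h2 _] := hT (k.+1 + t) (ltac:(lia)).
    rewrite ltn_neqAle h2 andbT; apply/negP => /eqP e2.
    have := hmin t; rewrite e2 eqxx => /(_ isT); lia.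
  exists (k.+1 + d); split => //; [lia | lia | exact: hall].
pose cM k := cnt (conf k) M js.
have hmono1 : forall k, k1 <= k -> cM k <= cM k.+1.
  move=> k hk; have [h1 h2 h3] := hT k hk; rewrite /cM hstep.
  apply: L4 => //; by rewrite -hout.
have hmono : forall k d, k1 <= k -> cM k <= cM (k + d).
  move=> k d hk; elim: d => [|d IH]; first by rewrite addn0.
  apply: leq_trans IH _; rewrite addnS; apply: hmono1; lia.
have hinc : forall k, k1 < k -> jj k = js -> reg (conf k) js = M -> cM k.+1 = (cM k).+1.
  move=> k hk e r; have [h1 h2 h3] := hT k (ltnW hk); rewrite /cM hstep.
  apply: L5 => //; by rewrite -hout.
have hgrow : forall p, exists k, k1 < k /\ p <= cM k.
  elim=> [|p [k [hk hp]]]; first by exists k1.+1.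
  have [k' [hk' _ e r]] := hA k.
  exists k'.+1; split; first by lia.
  rewrite (hinc k' ltac:(lia) e r) ltnS; apply: leq_trans hp _.
  have := hmono k (k' - k) (ltnW hk); by rewrite subnKC.
have [k [_ hk]] := hgrow N.+1.
by have := hcb k M js; rewrite /cM in hk; lia.
Qed.
End Core.
From Stdlib Require Import ClassicalEpsilon FunctionalExtensionality.

Lemma cv_hist (V : Type) (p0 : V) (pi : nat -> V) (jj ii : nat -> nat) k :
  pi 0 = p0 -> current_vertex p0 (history pi jj ii k) = pi k.
Proof.
move=> h0; rewrite /current_vertex /history -map_comp.
elim: k => [|k IH]; first by [].
by rewrite -addn1 iotaD map_cat last_cat IH add0n addn1.
Qed.

Theorem lemma2 (V : countType) (E : V -> V -> Prop) (lo hi : nat)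
  (L : V -> V -> nat) (p0 : V) :
  lo <= hi ->
  (forall v, exists w, E v w) ->
  (forall v w, E v w -> inI lo hi (L v w)) ->
  ~ even_graph E L p0 ->
  forall (jlo jhi N : nat), jlo <= jhi -> (jlo == 1) || (jlo == 2) ->
    adam_wins E L lo hi p0 jlo jhi N.
Proof.
move=> _ hex hL hne jlo jhi N _ _.
have [pi0 [[h00 hp0] hna]] : exists pi0, is_path E p0 pi0 /\ ~ parity_accepting (fun k => L (pi0 k) (pi0 k.+1)).
  apply: NNPP => hc; apply: hne => pi hp; apply: NNPP => hpa; apply: hc; by exists pi.
pose f v := proj1_sig (constructive_indefinite_description _ (hex v)).
have hf v : E v (f v) := proj2_sig (constructive_indefinite_description _ (hex v)).
pose sigma (h : seq (V * nat * nat)) :=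
  if current_vertex p0 h == pi0 (size h) then pi0 (size h).+1 else f (current_vertex p0 h).
exists sigma; split.
  move=> h; rewrite /sigma; case: eqP => [->|_]; [exact: hp0 | exact: hf].
move=> pi jj ii h0 hs hl.
have epi : forall k, pi k = pi0 k.
  elim=> [|k IH]; first by rewrite h0 h00.
  rewrite hs /sigma cv_hist // size_map size_iota IH eqxx //.
have -> : pi = pi0 by apply: functional_extensionality.
move=> [_ hw]; apply: (core _ _ _ hi _ _ _ _ _ _ _ _ hna hw).
  move=> k; have := hL _ _ (hp0 k); by case/andP.
move=> k o; have := hl k; rewrite !epi; case/andP => _ /implyP /(_ o) /and3P [a /andP [_ c] b].
by rewrite a b c.
Qed.
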